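(* For all integers $r \geq 3$ and $k \geq 3$, we have $s_r(K_k) \geq s_{r-1}(K_k)$.
   Context: All graphs are finite and simple. For graphs $G,H$ and an integer $r\ge 1$, write $G \rightarrow (H)_r$ if every colouring of the edges of $G$ with $r$ colours contains a monochromatic copy of $H$. A graph $G$ is $r$-Ramsey-minimal for $H$ if $G \rightarrow (H)_r$ but no proper subgraph $G'\subsetneq G$ satisfies $G' \rightarrow (H)_r$. Define $s_r(H) := \min \delta(G)$ over all graphs $G$ that are $r$-Ramsey-minimal for $H$, where $\delta$ denotes minimum degree. *)

(* Defs.v *)
From mathcomp Require Import all_boot.
Set Implicit Arguments. Unset Strict Implicit. Unset Printing Implicit Defensive.

Definition simple_graph (V : finType) (e : rel V) : Prop :=
  symmetric e /\ irreflexive e.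

(* An r-edge-colouring: each unordered pair {u,v} gets one colour in 'I_r
   (colours of non-edges are irrelevant). *)
Definition edge_colouring (V : finType) (r : nat) (c : V -> V -> 'I_r) : Prop :=
  forall u v, c u v = c v u.

Definition mono_clique (V : finType) (e : rel V) (r k : nat)
  (c : V -> V -> 'I_r) : Prop :=
  exists (f : 'I_k -> V) (col : 'I_r), injective f /\
    forall i j : 'I_k, i != j -> e (f i) (f j) /\ c (f i) (f j) = col.

Definition arrows (V : finType) (e : rel V) (r k : nat) : Prop :=
  forall c : V -> V -> 'I_r, edge_colouring c -> @mono_clique V e r k c.

Definition subgraph_rel (V : finType) (S : {set V}) (e' : rel V) :
  rel {x : V | x \in S} := fun x y => e' (val x) (val y).

Definition proper_subgraph (V : finType) (e : rel V) (S : {set V}) (e' : rel V) : Prop :=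
  simple_graph e' /\ (forall u v, e' u v -> e u v) /\
  (S != setT \/ exists u v, e u v /\ ~~ e' u v).

Definition ramsey_minimal (V : finType) (e : rel V) (r k : nat) : Prop :=
  simple_graph e /\ @arrows V e r k /\
  forall (S : {set V}) (e' : rel V), proper_subgraph e S e' ->
    ~ @arrows _ (@subgraph_rel V S e') r k.

(* minimum degree (for nonempty V; the seed #|V| exceeds every degree). *)
Definition min_degree (V : finType) (e : rel V) : nat :=
  \big[minn/#|V|]_(v : V) #|[set u | e v u]|.

(* Main.v *)
Require Import Defs.
From mathcomp Require Import all_boot zify.
From Stdlib Require Import Classical.
Set Implicit Arguments. Unset Strict Implicit. Unset Printing Implicit Defensive.

Lemma arrows_hom (V1 V2 : finType) (e1 : rel V1) (e2 : rel V2) r k (h : V1 -> V2) :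
  injective h -> (forall x y, e1 x y -> e2 (h x) (h y)) ->
  arrows e1 r k -> arrows e2 r k.
Proof.
move=> hi he A c cs.
have cs1 : edge_colouring (fun x y => c (h x) (h y)) by move=> x y; apply: cs.
have [f [col [fi fm]]] := A _ cs1.
exists (h \o f), col; split; first exact: inj_comp.
move=> i j ij; have [E C] := fm i j ij; split => //; exact: he.
Qed.

Definition Pgood (V : finType) (g : rel V) r k (S : {set V}) (e' : rel V) :=
  symmetric e' /\ irreflexive e' /\ (forall x y, e' x y -> g x y) /\
  arrows (@subgraph_rel _ S e') r k.

Definition meas (V : finType) (S : {set V}) (e' : rel V) :=
  #|S| + #|[set p : V * V | [&& p.1 \in S, p.2 \in S & e' p.1 p.2]]|.

Lemma ex_min_pair (V : finType) (P : {set V} -> rel V -> Prop) :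
  (exists S e, P S e) ->
  exists S e, P S e /\ forall S' e', P S' e' -> meas S e <= meas S' e'.
Proof.
move=> [S [e HP]].
suff: forall n S e, meas S e <= n -> P S e ->
  exists S e, P S e /\ forall S' e', P S' e' -> meas S e <= meas S' e'.
  by move=> H; exact: (H _ S e (leqnn _) HP).
elim=> [|n IH] S1 e1 Hm HP1;
  (case: (classic (exists S' e', P S' e' /\ meas S' e' < meas S1 e1)) =>
    [[S' [e' [HP' Hlt]]]|Hno]).
- lia.
- exists S1, e1; split => // S' e' HP'; rewrite leqNgt; apply/negP => lt.
  by apply: Hno; exists S', e'.
- apply: (IH S' e') => //; lia.
- exists S1, e1; split => // S' e' HP'; rewrite leqNgt; apply/negP => lt.
  by apply: Hno; exists S', e'.
Qed.

Lemma min_is_minimal (V : finType) (g : rel V) r k (S0 : {set V}) (e0 : rel V) :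
  Pgood g r k S0 e0 ->
  (forall S e', Pgood g r k S e' -> meas S0 e0 <= meas S e') ->
  ramsey_minimal (@subgraph_rel _ S0 e0) r k.
Proof.
move=> [sy [irr [sub ar]]] Hmin.
split; first by split => [x y|x]; rewrite /subgraph_rel; [exact: sy|exact: irr].
split => // T f [[fs fi] [fsub fpr]] arT.
pose W := {x : V | x \in S0}.
pose S1 := [set val a | a in T].
pose e1 := fun x y : V => [exists a : W, exists b : W,
   [&& a \in T, b \in T, val a == x, val b == y & f a b]].
have HP1 : Pgood g r k S1 e1.
  split; [|split].
  - move=> x y; apply/idP/idP => /existsP [a /existsP [b /and5P [aT bT ax bx fab]]];
    apply/existsP; exists b; apply/existsP; exists a; by rewrite aT bT ax bx fs /=.
  - move=> x; apply/negbTE/negP => /existsP [a /existsP [b /and5P [aT bT /eqP ax /eqP bx fab]]].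
    have ab : a = b by apply: val_inj; rewrite ax bx.
    by move: fab; rewrite ab fi.
  split.
  - move=> x y /existsP [a /existsP [b /and5P [aT bT /eqP ax /eqP bx fab]]].
    apply: sub; rewrite -ax -bx; exact: (fsub _ _ fab).
  - have hS : forall t : {t : W | t \in T}, val (val t) \in S1.
      by move=> t; apply/imsetP; exists (val t) => //; exact: valP.
    apply: (@arrows_hom _ _ _ _ r k (fun t => Sub (val (val t)) (hS t)) _ _ arT).
    + by move=> t t' /(congr1 val); rewrite !SubK => /val_inj /val_inj.
    + move=> t t'; rewrite /subgraph_rel !SubK => ftt.
      apply/existsP; exists (val t); apply/existsP; exists (val t').
      by rewrite (valP t) (valP t') !eqxx.
have := Hmin _ _ HP1; apply/negP; rewrite -ltnNge /meas.
have S1S0 : S1 \subset S0.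
  by apply/subsetP => x /imsetP [a _ ->]; exact: valP.
have E1E0 : [set p : V * V | [&& p.1 \in S1, p.2 \in S1 & e1 p.1 p.2]] \subset
            [set p : V * V | [&& p.1 \in S0, p.2 \in S0 & e0 p.1 p.2]].
  apply/subsetP => p; rewrite !inE => /and3P [p1 p2 /existsP [a /existsP [b
     /and5P [aT bT /eqP ax /eqP bx fab]]]].
  rewrite -ax -bx (valP a) (valP b); exact: (fsub _ _ fab).
case: fpr => [TnT | [u [w [euw nf]]]].
- have : #|S1| < #|S0|.
    rewrite card_imset; last exact: val_inj.
    have := proper_card (A := mem T) (B := mem [set: W]).
    rewrite properT TnT cardsT card_sig => /(_ isT).
    by rewrite (eq_card (B := mem S0)).
  have := subset_leq_card E1E0; lia.
- have : #|[set p : V * V | [&& p.1 \in S1, p.2 \in S1 & e1 p.1 p.2]]| <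
         #|[set p : V * V | [&& p.1 \in S0, p.2 \in S0 & e0 p.1 p.2]]|.
    apply: proper_card; apply/properP; split => //.
    exists (val u, val w); first by rewrite inE /= (valP u) (valP w).
    rewrite inE /=; apply/negP => /and3P [_ _ /existsP [a /existsP [b
     /and5P [aT bT /eqP ax /eqP bx fab]]]].
    have au : a = u by exact: val_inj.
    have bw : b = w by exact: val_inj.
    by move: nf; rewrite -au -bw fab.
  have := subset_leq_card S1S0; lia.
Qed.
Lemma bigmin_le (T : finType) x (F : T -> nat) a : \big[minn/x]_(i : T) F i <= F a.
Proof.
rewrite unlock /reducebig.
have : a \in index_enum T by rewrite mem_index_enum.
elim: (index_enum T) => //= b s IH; rewrite inE => /orP [/eqP ->|/IH]; first exact: geq_minl.
move=> H; exact: leq_trans (geq_minr _ _) H.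
Qed.

Theorem mainTheorem10 (r k : nat) (hr : 3 <= r) (hk : 3 <= k)
  (V : finType) (e : rel V) :
  ramsey_minimal e r k ->
  exists (W : finType) (e' : rel W),
    ramsey_minimal e' r.-1 k /\ min_degree e' <= min_degree e.
Proof.
case: r hr => [|[|r']] // hr.
move=> [Gs [Ga Gmin]].
have k0 : 0 < k by lia.
have k1 : 1 < k by lia.
have [f0 _] := Ga (fun _ _ => (ord0 : 'I_r'.+2)) (fun _ _ => erefl).
pose x0 := f0 (Ordinal k0).
pose deg := fun u : V => #|[set w | e u w]|.
case: (@arg_minnP V x0 predT deg isT) => v _ Hv.
have Hdv : deg v <= min_degree e.
  rewrite /min_degree; apply: (big_ind (fun m => deg v <= m)).
  - by rewrite /deg; apply: max_card.
  - by move=> a b ha hb; rewrite leq_min ha hb.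
  - by move=> u _; exact: Hv.
have Hpr : proper_subgraph e [set~ v] e.
  split; first done; split => //; left; apply/eqP => H.
  have : v \in [set~ v] by rewrite H inE.
  by rewrite !inE eqxx.
have NA := Gmin _ _ Hpr.
pose U := {x : V | x \in [set~ v]}.
have [cS [cSs cSn]] : exists cS : U -> U -> 'I_r'.+2, edge_colouring cS /\
    ~ mono_clique (@subgraph_rel _ [set~ v] e) k cS.
  apply: NNPP => H; apply: NA => c cs; apply: NNPP => nm; apply: H; by exists c.
pose c := fun x y : V => match (insub x : option U), (insub y : option U) with
   | Some a, Some b => cS a b | _, _ => ord0 end.
have cs : edge_colouring c.
  move=> x y; rewrite /c; case: (insub x : option U) => [a|];
  case: (insub y : option U) => [b|] //; exact: cSs.
have cval : forall a b : U, c (val a) (val b) = cS a b.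
  by move=> a b; rewrite /c !valK.
have NoMono : forall (f : 'I_k -> V) col, injective f -> (forall i, f i != v) ->
   (forall i j, i != j -> e (f i) (f j) /\ c (f i) (f j) = col) -> False.
  move=> f col fi fv fm; apply: cSn.
  have hf : forall i, f i \in [set~ v] by move=> i; rewrite !inE fv.
  exists (fun i => Sub (f i) (hf i) : U), col; split.
  - by move=> i j /(congr1 val); rewrite !SubK; exact: fi.
  - move=> i j ij; have [E C] := fm i j ij; split; first by rewrite /subgraph_rel !SubK.
    rewrite -C; have := cval (Sub (f i) (hf i)) (Sub (f j) (hf j)).
    by rewrite !SubK => ->.
have other : forall i : 'I_k, exists j, i != j.
  move=> i; case: (eqVneq i (Ordinal k0)) => [->|H]; last by exists (Ordinal k0).
  by exists (Ordinal k1); apply/eqP => /(congr1 val).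
have wn : forall x : 'I_r'.+1, widen_ord (leqnSn _) x != ord_max :> 'I_r'.+2.
  move=> x; apply/eqP => /(congr1 val) /= H; have := ltn_ord x; by rewrite H ltnn.
pose e1 := fun x y => e x y && [|| x == v, y == v | c x y != ord_max].
have A1 : arrows e1 r'.+1 k.
  move=> c1 c1s.
  pose c2 := fun x y : V => if [&& x != v, y != v & c x y == ord_max]
     then (ord_max : 'I_r'.+2) else widen_ord (leqnSn _) (c1 x y).
  have c2s : edge_colouring c2.
    by move=> x y; rewrite /c2 (cs x y) (c1s x y) andbCA.
  have [f [col [fi fm]]] := Ga c2 c2s.
  case: (eqVneq col ord_max) => [Hc | Hc].
  - exfalso.
    have key : forall i j, i != j -> [&& f i != v, f j != v & c (f i) (f j) == ord_max].
      move=> i j ij; have [_ C] := fm i j ij; move: C; rewrite /c2 Hc.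
      case: ifP => // _ H; by move: (wn (c1 (f i) (f j))); rewrite H eqxx.
    have fv : forall i, f i != v.
      by move=> i; have [j ij] := other i; case/and3P: (key i j ij).
    apply: (NoMono f ord_max fi fv) => i j ij; have [E _] := fm i j ij; split => //.
    by case/and3P: (key i j ij) => _ _ /eqP.
  - have colr : col < r'.+1.
      have H : val col != r'.+1 by apply/eqP => H; move: Hc; rewrite (_ : col = ord_max) ?eqxx //; apply: val_inj.
      by have := ltn_ord col; rewrite ltnS leq_eqVlt (negbTE H).
    exists f, (Ordinal colr); split => // i j ij; have [E C] := fm i j ij.
    move: C; rewrite /c2; case: ifP => [_ Hm|Hn Hw]; first by rewrite -Hm eqxx in Hc.
    split.
    + rewrite /e1 E /=; move: Hn.
      by case: (f i == v); case: (f j == v); case: (c (f i) (f j) == ord_max).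
    + by apply: val_inj; rewrite /= -Hw.
case: Gs => esym eirr.
have HPT : Pgood e1 r'.+1 k setT e1.
  split; [|split; [|split]].
  - by move=> x y; rewrite /e1 esym (cs x y) orbCA.
  - by move=> x; rewrite /e1 eirr.
  - done.
  - apply: (@arrows_hom _ _ _ _ r'.+1 k (fun x => Sub x (in_setT x) : {x : V | x \in setT}) _ _ A1).
    + by move=> x y /(congr1 val); rewrite !SubK.
    + by move=> x y; rewrite /subgraph_rel !SubK.
have [S0 [e0 [HP Hmin]]] := @ex_min_pair V (Pgood e1 r'.+1 k)
   (ex_intro _ setT (ex_intro _ e1 HPT)).
have RM := min_is_minimal HP Hmin.
exists {x : V | x \in S0}, (@subgraph_rel _ S0 e0); split => //.
have vS : v \in S0.
  apply: NNPP => vn; move: HP => [_ [_ [sub0 ar0]]].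
  pose cW := fun a b : {x : V | x \in S0} => (inord (c (val a) (val b)) : 'I_r'.+1).
  have cWs : edge_colouring cW by move=> a b; rewrite /cW cs.
  have [f [col [fi fm]]] := ar0 cW cWs.
  have fv : forall i, val (f i) != v.
    by move=> i; apply/eqP => H; apply: vn; rewrite -H; exact: valP.
  apply: (NoMono (val \o f) (widen_ord (leqnSn _) col)).
  - exact: inj_comp val_inj fi.
  - exact: fv.
  - move=> i j ij; have [E C] := fm i j ij.
    have := sub0 _ _ E; rewrite /e1 => /andP [E' H]; split => //.
    have Hc : c (val (f i)) (val (f j)) != ord_max.
      by move: H; rewrite (negbTE (fv i)) (negbTE (fv j)).
    apply: val_inj; rewrite /= -C /cW inordK //.
    have H2 : val (c (val (f i)) (val (f j))) != r'.+1.
      by apply/eqP => H'; move: Hc; rewrite (_ : c _ _ = ord_max) ?eqxx //; apply: val_inj.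
    by have := ltn_ord (c (val (f i)) (val (f j))); rewrite ltnS leq_eqVlt (negbTE H2).
apply: leq_trans Hdv.
pose vv : {x : V | x \in S0} := Sub v vS.
apply: (@leq_trans #|[set u | @subgraph_rel _ S0 e0 vv u]|).
- exact: bigmin_le.
- rewrite /deg -(card_imset _ val_inj); apply: subset_leq_card; apply/subsetP => x.
  move=> /imsetP [u Hu ->]; move: Hu; rewrite (@in_set {x : V | x \in S0}) inE /subgraph_rel /vv SubK => E.
  by have := HP.2.2.1 _ _ E; rewrite /e1 => /andP [].
Qed.
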